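(* Let $(X,T),(Y,S)$ be topological dynamical systems, let $y_0\in Y$ and $s_0\in\mathbb{N}$ with $S^{s_0}y_0=y_0$, and let $\nu=\frac1{s_0}\sum_{j=0}^{s_0-1}\delta_{S^jy_0}$. Then $$\mathcal{M}_{T\times S}(X\times Y)\cap(\pi_Y)_*^{-1}\{\nu\}=\Big\{\tfrac1{s_0}\sum_{j=0}^{s_0-1}(T\times S)^j_*(\mu\times\delta_{y_0}):\mu\in\mathcal{M}_{T^{s_0}}(X)\Big\}.$$ Consequently, for every $f\in C(X\times Y)$, $\psi_f(\nu)\ge\min_{x\in X}\frac1{s_0}\sum_{j=0}^{s_0-1}f(T^jx,S^jy_0)$.
   Context: A topological dynamical system $(X,T)$: $X$ compact metrizable, $T$ a homeomorphism; $\mathcal{M}_T(X)$ its invariant Borel probability measures. $\pi_Y(x,y)=y$. $\psi_f(\nu)=\min\{\int f\,d\lambda:\lambda\in\mathcal{M}_{T\times S}(X\times Y),(\pi_Y)_*\lambda=\nu\}$. *)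

(* Defs.v *)
From HB Require Import structures.
From mathcomp Require Import all_boot all_order all_algebra.
From mathcomp Require Import all_classical all_reals all_analysis.
Set Implicit Arguments. Unset Strict Implicit. Unset Printing Implicit Defensive.
Import Order.TTheory GRing.Theory Num.Theory.
Import numFieldNormedType.Exports.
Local Open Scope classical_set_scope.
Local Open Scope ring_scope.

HB.instance Definition _ (X Y : ptopologicalType) := Topological.on (X * Y)%type.

Definition borel (T : ptopologicalType) := g_sigma_algebraType (@open T).

Notation Mprob T R := (probability (borel T) R).

(** A topological dynamical system: T compact metrizable (here: a Hausdorff
    pseudometric space, i.e. a metric space), f a homeomorphism. *)
Definition tds (R : realType) (X : pseudoPMetricType R) (f : X -> X) : Prop :=
  compact [set: X] /\ hausdorff_space X /\ continuous f /\
  exists g : X -> X, continuous g /\ cancel f g /\ cancel g f.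

Definition is_invariant (X : ptopologicalType) (R : realType)
  (f : X -> X) (mu : Mprob X R) : Prop :=
  forall A : set (borel X), measurable A -> mu (f @^-1` A) = mu A.

Definition pushf (X Y : Type) (R : realType) (f : X -> Y)
  (mu : set X -> \bar R) : set Y -> \bar R := fun A => mu (f @^-1` A).

(** The product measure mu x delta_{y0} on X x Y, written out:
    (mu x delta_{y0})(A) = mu {x | (x,y0) \in A}. *)
Definition prod_dirac (X Y : Type) (R : realType) (mu : set X -> \bar R)
  (y0 : Y) : set (X * Y) -> \bar R := fun A => mu [set x | A (x, y0)].

Definition prodmap (X Y : Type) (f : X -> X) (g : Y -> Y) : X * Y -> X * Y :=
  fun p => (f p.1, g p.2).

Definition orbit_measure (Y : ptopologicalType) (R : realType) (S : Y -> Y)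
  (y0 : Y) (s0 : nat) : set (borel Y) -> \bar R :=
  fun B => (((s0%:R)^-1)%:E * \sum_(j < s0) (\d_(iter j S y0 : borel Y) : set (borel Y) -> \bar R) B)%E.

Definition orbit_lift (X Y : Type) (R : realType) (T : X -> X) (S : Y -> Y)
  (mu : set X -> \bar R) (y0 : Y) (s0 : nat) : set (X * Y) -> \bar R :=
  fun A => (((s0%:R)^-1)%:E *
    \sum_(j < s0) pushf (iter j (prodmap T S)) (prod_dirac mu y0) A)%E.

Definition in_fiber (R : realType) (X Y : pseudoPMetricType R) (T : X -> X) (S : Y -> Y)
  (nu : set (borel Y) -> \bar R) (lam : Mprob (X * Y)%type R) : Prop :=
  is_invariant (prodmap T S) lam /\
  forall B : set (borel Y), measurable B -> pushf snd lam B = nu B.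

(** psi_f(nu) = min { int f dlam : lam in M_{T x S}(X x Y), (pi_Y)_* lam = nu },
    written as an infimum (the minimum is attained, so they agree). *)
Definition psi (R : realType) (X Y : pseudoPMetricType R) (T : X -> X) (S : Y -> Y)
  (f : X * Y -> R) (nu : set (borel Y) -> \bar R) : \bar R :=
  ereal_inf [set (\int[lam]_z (f z)%:E)%E | lam in [set lam | in_fiber T S nu lam]].

(* Main.v *)
Require Import Defs.
From HB Require Import structures.
From mathcomp Require Import all_boot all_order all_algebra.
From mathcomp Require Import all_classical all_reals all_analysis.
Import Order.TTheory GRing.Theory Num.Theory.
Import numFieldNormedType.Exports.
Local Open Scope classical_set_scope.
Local Open Scope ring_scope.
From mathcomp Require Import ring lra.
From mathcomp Require Import measurable_realfun.
Lemma cont_meas (A B : ptopologicalType) (g : A -> B) : continuous g ->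
  measurable_fun [set: borel A] (g : borel A -> borel B).
Proof.
move=> cg.
have h : @measurable _ (borel B) = <<s @open B>> := erefl.
apply: (@measurability _ _ (borel A) (borel B) _ _ _ h).
move=> _ [U oU <-]; apply: sub_sigma_algebra; rewrite setTI.
exact: (proj1 (continuousP g) cg).
Qed.

Lemma cont_measR (R : realType) (A : ptopologicalType) (g : A -> R) : continuous g ->
  measurable_fun [set: borel A] (g : borel A -> R).
Proof.
move=> cg; apply: (@measurability _ _ (borel A) R _ _ _ (measurable_realfun.RGenOpens.measurableE R)).
move=> _ [_ [a [b ->] <-]]; apply: sub_sigma_algebra; rewrite setTI.
apply: (proj1 (continuousP g) cg); exact: interval_open.
Qed.
Section C.
Variables (X Y : ptopologicalType).
Lemma fst_cont : continuous (@fst X Y).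
Proof. move=> z; exact: cvg_fst. Qed.
Lemma snd_cont : continuous (@snd X Y).
Proof. move=> z; exact: cvg_snd. Qed.
Lemma prodmap_cont (T : X -> X) (S : Y -> Y) : continuous T -> continuous S ->
  continuous (prodmap T S).
Proof.
move=> cT cS z; apply: cvg_pair => /=.
  exact: (continuous_comp (fst_cont z) (cT z.1)).
exact: (continuous_comp (snd_cont z) (cS z.2)).
Qed.
Lemma sec_cont (y : Y) : continuous (fun x : X => (x, y)).
Proof. move=> x; apply: cvg_pair; [exact: cvg_id | exact: cvg_cst]. Qed.
End C.
Arguments fst_cont {X Y}.
Arguments snd_cont {X Y}.
Arguments prodmap_cont {X Y T S}.
Arguments sec_cont {X Y}.

Lemma sum_mod (V : nmodType) (p q : nat) (G : nat -> V) :
  (forall i, G (i + p)%N = G i) ->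
  \sum_(i < (q * p)%N) G i = (\sum_(i < p) G i) *+ q.
Proof.
move=> Gp; elim: q => [|q IH]; first by rewrite mul0n big_ord0 mulr0n.
rewrite mulSnr.
transitivity (\sum_(i < (q * p)%N) G (lshift p i) + \sum_(i < p) G (rshift (q * p)%N i)).
  exact: big_split_ord.
rewrite IH mulrSr; congr (_ + _).
apply: eq_bigr => i _ /=.
elim: q {IH} => [|q IH]; first by rewrite mul0n add0n.
by rewrite mulSnr addnAC Gp.
Qed.

Lemma iter_inj (U : Type) (f : U -> U) n : injective f -> injective (iter n f).
Proof. move=> fi; elim: n => [//|n IH] x y /=; by move/fi/IH. Qed.

Section Per.
Variables (U : Type) (S : U -> U) (y0 : U) (s0 : nat).
Hypotheses (Sinj : injective S) (hs0 : (0 < s0)%N) (hper : iter s0 S y0 = y0).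

Let ex_per : exists n, (0 < n)%N && `[< iter n S y0 = y0 >].
Proof. by exists s0; rewrite hs0; apply/asboolP. Qed.

Definition per := ex_minn ex_per.

Lemma per_spec : [/\ (0 < per)%N, iter per S y0 = y0 &
  forall n, (0 < n)%N -> iter n S y0 = y0 -> (per <= n)%N].
Proof.
rewrite /per; case: ex_minnP => m /andP[m0 /asboolP hm] hmin; split => //.
by move=> n n0 hn; apply: hmin; rewrite n0; apply/asboolP.
Qed.

Lemma per_gt0 : (0 < per)%N. Proof. by case: per_spec. Qed.
Lemma iter_per : iter per S y0 = y0. Proof. by case: per_spec. Qed.

Lemma iter_mul_per k : iter (k * per) S y0 = y0.
Proof.
elim: k => [//|k IH]; by rewrite mulSn iterD IH iter_per.
Qed.

Lemma iter_addp j : iter (j + per) S y0 = iter j S y0.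
Proof. by rewrite iterD iter_per. Qed.

Lemma iter_mod j : iter (j %% per) S y0 = iter j S y0.
Proof.
by rewrite {2}(divn_eq j per) addnC iterD iter_mul_per.
Qed.

Lemma per_distinct i j : (i < per)%N -> (j < per)%N ->
  iter i S y0 = iter j S y0 -> i = j.
Proof.
have [_ _ hmin] := per_spec.
wlog ij : i j / (i <= j)%N.
  move=> W ip jp e; case: (leqP i j) => h; first exact: W.
  by apply/esym/W => //; exact: ltnW.
move=> ip jp e; apply/eqP; rewrite eqn_leq ij /=; rewrite leqNgt; apply/negP => lt.
have e2 : iter (j - i) S y0 = y0.
  apply: (@iter_inj _ _ i Sinj); rewrite -iterD subnKC //.
have := hmin (j - i)%N; rewrite subn_gt0 lt => /(_ isT e2).
by rewrite leqNgt (leq_ltn_trans (leq_subr i j) jp).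
Qed.

Lemma per_dvd : (s0 %% per = 0)%N.
Proof.
have [p0 _ hmin] := per_spec.
apply/eqP; rewrite -leqn0 leqNgt; apply/negP => h.
have := hmin _ h; rewrite iter_mod hper => /(_ erefl).
by rewrite leqNgt ltn_pmod.
Qed.

Lemma s0_eq : s0 = ((s0 %/ per) * per)%N.
Proof. by rewrite {1}(divn_eq s0 per) per_dvd addn0. Qed.

End Per.
Section PushM.
Local Open Scope ereal_scope.
Context d d' (T1 : measurableType d) (T2 : measurableType d') (R : realType)
  (m : {measure set T1 -> \bar R}) (f : T1 -> T2).
Definition pushM (mf : measurable_fun [set: T1] f) : set T2 -> \bar R :=
  fun A => m (f @^-1` A).
Variable mf : measurable_fun [set: T1] f.
Let pushM0 : pushM mf set0 = 0.
Proof. by rewrite /pushM preimage_set0 measure0. Qed.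
Let pushM_ge0 A : 0 <= pushM mf A.
Proof. by apply: measure_ge0. Qed.
Let pushM_sa : semi_sigma_additive (pushM mf).
Proof.
move=> F mF tF mUF; rewrite /pushM preimage_bigcup.
apply: measure_semi_sigma_additive.
- by move=> n; rewrite -[X in measurable X]setTI; exact: mf.
- apply/trivIsetP => /= i j _ _ ij; rewrite -preimage_setI.
  by move/trivIsetP : tF => /(_ _ _ _ _ ij) ->//; rewrite preimage_set0.
- by rewrite -preimage_bigcup -[X in measurable X]setTI; exact: mf.
Qed.
HB.instance Definition _ := isMeasure.Build _ _ _ (pushM mf) pushM0 pushM_ge0 pushM_sa.
End PushM.
Arguments pushM {d d' T1 T2 R} m {f} mf.

Lemma mpre (A B : ptopologicalType) (g : A -> B) (E : set (borel B)) :
  continuous g -> measurable E -> measurable (g @^-1` E : set (borel A)).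
Proof.
move=> cg mE; have := @cont_meas A B g cg measurableT E mE; by rewrite setTI.
Qed.

Arguments mpre {A B g E}.
Arguments cont_meas {A B g}.
Arguments cont_measR {R A g}.

Lemma cont_iter (U : topologicalType) (f : U -> U) : continuous f ->
  forall j, continuous (iter j f).
Proof.
move=> cf; elim => [|j IH] x /=; first exact: cvg_id.
exact: (continuous_comp (IH x) (cf _)).
Qed.

Lemma iter_prodmap (U V : Type) (f : U -> U) (g : V -> V) j z :
  iter j (prodmap f g) z = (iter j f z.1, iter j g z.2).
Proof. elim: j => [|j IH]; first by case: z. by rewrite iterS IH. Qed.

Lemma meas_set1 (Y : ptopologicalType) (y : Y) : hausdorff_space Y ->
  measurable ([set y] : set (borel Y)).
Proof.
move=> hY; rewrite -(setCK [set y]); apply: measurableC; apply: sub_sigma_algebra.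
exact/closed_openC/accessible_closed_set1/hausdorff_accessible.
Qed.
Arguments meas_set1 {Y}.

Lemma ge0_integral_pushM d d' (T1 : measurableType d) (T2 : measurableType d')
  (R : realType) (m : {measure set T1 -> \bar R}) (f : T1 -> T2)
  (mf : measurable_fun setT f) (h : T2 -> \bar R) :
  measurable_fun setT h -> (forall y, (0 <= h y)%E) ->
  (\int[pushM m mf]_y h y = \int[m]_x h (f x))%E.
Proof.
move=> mh h0.
have e := ge0_integral_pushforward mf m measurableT mh (fun y _ => h0 y).
apply: (etrans _ (etrans e _)).
  by apply: eq_measure_integral.
by rewrite preimage_setT.
Qed.

Lemma cont_bounded (R : realType) (Z : ptopologicalType) (f : Z -> R) :
  compact [set: Z] -> continuous f -> exists M, forall z, `|f z| <= M.
Proof.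
move=> cZ cf.
have : compact (f @` setT) by apply: continuous_compact => //; exact: continuous_subspaceT.
move/compact_bounded => [M [Mr HM]].
exists (`|M| + 1) => z; apply: (HM (`|M| + 1)) => //.
  by rewrite (le_lt_trans (ler_norm M)) // ltrDl.
Qed.

Lemma compact_prodT (X Y : ptopologicalType) : compact [set: X] -> compact [set: Y] ->
  compact [set: (X * Y)%type].
Proof. move=> cX cY; rewrite -setXTT; exact: compact_setX. Qed.


Lemma prob_setT_meas d (U : measurableType d) (R : realType) (P : probability U R) :
  ((P : measure U R) setT = 1)%E.
Proof. exact: probability_setT. Qed.

Section Main.
Variables (R : realType) (X Y : pseudoPMetricType R) (T : X -> X) (S : Y -> Y).
Hypotheses (cT : continuous T) (cS : continuous S) (Sinj : injective S)
  (hY : hausdorff_space Y).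
Variables (y0 : Y) (s0 : nat).
Hypotheses (hs0 : (0 < s0)%N) (hper : iter s0 S y0 = y0).

Local Notation F := (prodmap T S).
Let cF : continuous F := prodmap_cont cT cS.
Local Notation p := (per _ S y0 s0 hs0 hper).
Local Notation q := (s0 %/ p)%N.

Definition Ey (y : Y) : set (borel (X * Y)%type) := snd @^-1` [set y].
Lemma mEy y : measurable (Ey y).
Proof. exact: (mpre snd_cont (meas_set1 y hY)). Qed.

Lemma inv_iter (lam : Mprob (X * Y)%type R) : is_invariant F lam ->
  forall j (A : set (borel (X * Y)%type)), measurable A ->
  lam (iter j F @^-1` A) = lam A.
Proof.
move=> inv; elim => [//|j IH] A mA.
have -> : iter j.+1 F @^-1` A = iter j F @^-1` (F @^-1` A) by [].
by rewrite IH ?inv //; exact: mpre cF mA.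
Qed.

Definition Orb n : set (borel Y) := \bigcup_(r in [set r | (r < n)%N]) [set iter r S y0].
Lemma mOrb n : measurable (Orb n).
Proof. by apply: bigcup_measurable => k _; exact: meas_set1. Qed.

Local Notation nu := (orbit_measure R S y0 s0).

Section Fib.
Variable lam : Mprob (X * Y)%type R.
Hypotheses (linv : is_invariant F lam)
  (lmarg : forall B : set (borel Y), measurable B -> pushf snd lam B = nu B).

Lemma sum_Ey (B : set (borel (X * Y)%type)) : measurable B -> forall n, (n <= p)%N ->
  (\sum_(r < n) lam (B `&` Ey (iter r S y0)) = lam (B `&` snd @^-1` Orb n))%E.
Proof.
move=> mB; elim => [|n IH] np.
  rewrite big_ord0.
  have -> : B `&` snd @^-1` Orb 0 = set0.
    by apply/seteqP; split => // z [_ [r /= ]].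
  by rewrite measure0.
rewrite big_ord_recr /= IH ?(ltnW np) //.
have -> : B `&` snd @^-1` Orb n.+1 =
   (B `&` snd @^-1` Orb n) `|` (B `&` Ey (iter n S y0)).
  apply/seteqP; split => z.
    move=> [Bz [r /= rn zr]]; rewrite ltnS leq_eqVlt in rn.
    case/orP: rn => [/eqP rn|rn]; first by right; split => //; rewrite /Ey /= zr rn.
    by left; split => //; exists r.
  case=> [[Bz [r /= rn zr]]|[Bz /= zr]]; split => //.
    by exists r => //=; exact: ltnW.
  by exists n => //=.
rewrite measureU //.
- by apply: measurableI => //; apply: (mpre snd_cont); exact: mOrb.
- by apply: measurableI => //; exact: mEy.
apply/seteqP; split => // z [[_ [r /= rn zr]] [_ /= zn]].
have := @per_distinct _ _ _ _ Sinj hs0 hper r n.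
rewrite (leq_trans rn (ltnW np)) np -zr zn => /(_ isT isT erefl) rnE.
by rewrite rnE ltnn in rn.
Qed.


Lemma nu_compl : nu (~` Orb p) = 0%E.
Proof.
rewrite /orbit_measure big1 ?mule0 // => j _; rewrite diracE.
have h : Orb p (iter j S y0).
  exists (j %% p)%N => /=; first by rewrite ltn_pmod // per_gt0.
  by rewrite iter_mod.
rewrite (_ : (_ \in _) = false) //; apply/negbTE/negP => /set_mem; exact.
Qed.

Lemma lam_orb (B : set (borel (X * Y)%type)) : measurable B ->
  lam B = lam (B `&` snd @^-1` Orb p).
Proof.
move=> mB.
have mO : measurable (snd @^-1` Orb p : set (borel (X * Y)%type)).
  exact: (mpre snd_cont (mOrb p)).
rewrite -{1}(setIT B) -(setUCr (snd @^-1` Orb p)) setIUr measureU //.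
- rewrite [X in (_ + X)%E](_ : _ = 0%E) ?adde0 //.
  apply/eqP; rewrite eq_le measure_ge0 andbT.
  rewrite -nu_compl -lmarg; last by apply: measurableC; exact: mOrb.
  rewrite /pushf -preimage_setC; apply: le_measure; rewrite ?inE.
  + by apply: measurableI => //; exact: measurableC.
  + exact: measurableC.
  + by move=> z [].
- exact: measurableI.
- by apply: measurableI => //; exact: measurableC.
- by apply/seteqP; split => // z [[_ ?] [_ ?]].
Qed.

Lemma mnormalizeE d (U : measurableType d)
  (m : {measure set U -> \bar R}) (P : probability U R) (A : set U) (c : R) :
  m setT = c%:E -> c != 0 -> mnormalize m P A = (m A * (c^-1)%:E)%E.
Proof. by move=> mc c0; rewrite /mnormalize mc eqe (negbTE c0). Qed.

Lemma natmulE (r : R) n : ((r%:E : \bar R) *+ n)%R = (r *+ n)%:E.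
Proof.
elim: n => [|n IH]; first by rewrite !mulr0n.
by rewrite !mulrS IH -EFinD.
Qed.

Lemma sum_mod' (V : nmodType) (n : nat) (G : nat -> V) :
  (forall i, G (i + p)%N = G i) -> n = (q * p)%N ->
  \sum_(i < n) G i = (\sum_(i < p) G i) *+ q.
Proof. by move=> Gp ->; exact: sum_mod. Qed.

Lemma sum_all (B : set (borel (X * Y)%type)) : measurable B ->
  \sum_(j < s0) lam (B `&` Ey (iter j S y0)) = lam B *+ q.
Proof.
move=> mB; rewrite (@sum_mod' _ s0 (fun j => lam (B `&` Ey (iter j S y0)))).
- by rewrite (sum_Ey _ mB _ (leqnn p)) -lam_orb.
- by move=> i /=; rewrite iter_addp.
- exact: s0_eq.
Qed.

Lemma q_gt0 : (0 < q)%N.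
Proof.
have := @s0_eq _ S y0 s0 hs0 hper; case: (s0 %/ _)%N => //= h.
by move: hs0; rewrite h.
Qed.

Lemma c_val : lam (Ey y0) = (q%:R / s0%:R)%:E.
Proof.
have := lmarg _ (meas_set1 y0 hY); rewrite /pushf /Ey => ->.
rewrite /orbit_measure (@sum_mod' _ s0 (fun j => (\d_(iter j S y0 : borel Y) : set (borel Y) -> \bar R) [set y0])).
- have [p' ep] : exists p', p = p'.+1 by exists p.-1; rewrite prednK // per_gt0.
  have -> : \sum_(i < p) (\d_(iter i S y0 : borel Y) : set (borel Y) -> \bar R) [set y0] = 1%E.
    rewrite ep big_ord_recl /= big1 ?adde0.
      by rewrite diracE (_ : (_ \in _) = true) //; apply/mem_set.
    move=> i _; rewrite diracE (_ : (_ \in _) = false) //.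
    apply/negbTE/negP => /set_mem /= h.
    have := @per_distinct _ _ _ _ Sinj hs0 hper (bump 0 i) 0.
    by rewrite ep /bump /= add1n ltnS ltn_ord => /(_ isT isT h).
  have -> : forall n, ((1%:E : \bar R) *+ n)%R = (n%:R)%:E.
    elim => [|n IH]; first by rewrite mulr0n.
    by rewrite mulrS IH -EFinD -natr1 addrC.
  by rewrite -EFinM mulrC.
- by move=> i /=; rewrite iter_addp.
- exact: s0_eq.
Qed.

Lemma es : (s0%:R : R) = q%:R * p%:R.
Proof. by rewrite -natrM -s0_eq. Qed.

Lemma p_neq0 : (p%:R : R) != 0.
Proof. by rewrite pnatr_eq0 -lt0n per_gt0. Qed.

Lemma q_neq0 : (q%:R : R) != 0.
Proof. by rewrite pnatr_eq0 -lt0n q_gt0. Qed.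

Definition muF : probability (borel X) R :=
  mnormalize (pushM (@mrestr _ _ _ (Ey y0) lam (mEy y0)) (cont_meas (@fst_cont X Y)))
    (\d_ (point : borel X)).

Lemma mu_val (A : set (borel X)) :
  muF A = (lam ((fst @^-1` A) `&` Ey y0) * (p%:R)%:E)%E.
Proof.
rewrite (_ : muF A = mnormalize (pushM (@mrestr _ _ _ (Ey y0) lam (mEy y0))
   (cont_meas (@fst_cont X Y))) (\d_ (point : borel X)) A) //.
rewrite (@mnormalizeE _ _ _ _ _ (q%:R / s0%:R)); last 2 first.
- by rewrite /pushM /= preimage_setT /mrestr setTI c_val.
- rewrite mulf_eq0 invr_eq0 negb_or q_neq0 /=.
  by rewrite pnatr_eq0 -lt0n hs0.
rewrite /pushM /mrestr /=.
congr (_ * _)%E; congr EFin.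
rewrite es; field; by rewrite q_neq0 p_neq0.
Qed.

Lemma muF_inv : is_invariant (iter s0 T) muF.
Proof.
move=> A mA; rewrite !mu_val; congr (_ * _)%E.
have -> : fst @^-1` (iter s0 T @^-1` A) `&` Ey y0 =
    iter s0 F @^-1` (fst @^-1` A `&` Ey y0).
  apply/seteqP; split => z /=; rewrite /Ey /= iter_prodmap /=.
  - by move=> [Az z2]; split => //; rewrite z2.
  - move=> [Az h]; split => //; apply: (@iter_inj _ S s0 Sinj); by rewrite h hper.
rewrite inv_iter //; apply: measurableI; last exact: mEy.
exact: (mpre fst_cont mA).
Qed.

Lemma lift_val (B : set (borel (X * Y)%type)) : measurable B ->
  lam B = orbit_lift T S muF y0 s0 B.
Proof.
move=> mB; rewrite /orbit_lift /pushf /prod_dirac.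
have e j : muF [set x | (iter j F @^-1` B) (x, y0)] =
    (lam (B `&` Ey (iter j S y0)) * (p%:R)%:E)%E.
  rewrite mu_val; congr (_ * _)%E.
  have -> : fst @^-1` [set x | (iter j F @^-1` B) (x, y0)] `&` Ey y0 =
      iter j F @^-1` (B `&` Ey (iter j S y0)).
    apply/seteqP; split => -[x y] /=; rewrite /Ey /= !iter_prodmap /=.
    - by move=> [Bz ->].
    - move=> [Bz h]; have z2 : y = y0 by exact: (@iter_inj _ S j Sinj).
      by rewrite z2 in Bz *.
  rewrite inv_iter //; apply: measurableI => //; exact: mEy.
under eq_bigr => j _ do rewrite e.
rewrite -ge0_sume_distrl; last first.
  by move=> j _; exact: measure_ge0.
rewrite sum_all // -(@fineK _ (lam B)); last exact: fin_num_measure.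
rewrite natmulE -!EFinM; congr EFin.
rewrite -mulr_natr es; field; by rewrite q_neq0 p_neq0.
Qed.

End Fib.
Section Lift.
Variable mu : Mprob X R.
Hypothesis minv : is_invariant (iter s0 T) mu.

Lemma shift_sum (n : nat) (a : nat -> \bar R) : (0 < n)%N -> a n = a 0%N ->
  \sum_(j < n) a j.+1 = \sum_(j < n) a j.
Proof.
case: n => // n _ h; rewrite big_ord_recr big_ord_recl /= h addeC; congr (_ + _)%E.
Qed.

Lemma lift_inv (A : set (borel (X * Y)%type)) : measurable A ->
  orbit_lift T S mu y0 s0 (F @^-1` A) = orbit_lift T S mu y0 s0 A.
Proof.
move=> mA; rewrite /orbit_lift; congr (_ * _)%E.
rewrite /pushf /prod_dirac.
apply: (@shift_sum s0 (fun j => mu [set x | (iter j F @^-1` A) (x, y0)])) => //.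
have -> : [set x | (iter s0 F @^-1` A) (x, y0)] =
    iter s0 T @^-1` [set x | A (x, y0)].
  by apply/seteqP; split => x /=; rewrite iter_prodmap /= hper.
by rewrite minv //; exact: (mpre (sec_cont y0) mA).
Qed.

Lemma lift_marg (B : set (borel Y)) : measurable B ->
  orbit_lift T S mu y0 s0 (snd @^-1` B) = nu B.
Proof.
move=> mB; rewrite /orbit_lift /orbit_measure; congr (_ * _)%E.
apply: eq_bigr => j _; rewrite /pushf /prod_dirac diracE.
have [h|h] := pselect (B (iter j S y0)).
- rewrite (_ : [set x | _] = setT) ?probability_setT; last first.
    by apply/seteqP; split => x //= _; rewrite iter_prodmap.
  by rewrite (_ : (_ \in _) = true) //; exact: mem_set.
- rewrite (_ : [set x | _] = set0) ?measure0; last first.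
    by apply/seteqP; split => x //=; rewrite iter_prodmap.
  by rewrite (_ : (_ \in _) = false) //; apply/negbTE/negP => /set_mem.
Qed.

Lemma lift_fiber (lam : Mprob (X * Y)%type R) :
  (forall A : set (borel (X * Y)%type), measurable A ->
         lam A = orbit_lift T S mu y0 s0 A) ->
  in_fiber T S nu lam.
Proof.
move=> hl; split.
- move=> A mA; rewrite !hl //; first exact: lift_inv.
  exact: (mpre cF mA).
- move=> B mB; rewrite /pushf hl; first exact: lift_marg.
  exact: (mpre snd_cont mB).
Qed.

Lemma cphi j : continuous (fun x : X => iter j F (x, y0)).
Proof. move=> x; exact: (continuous_comp (sec_cont y0 x) (@cont_iter _ _ cF j _)). Qed.

Definition mphi j := cont_meas (cphi j).

Definition lamF : probability (borel (X * Y)%type) R :=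
  mnormalize (msum (fun j => pushM mu (mphi j)) s0) (\d_ (point : borel (X * Y)%type)).

Lemma lamF_val (A : set (borel (X * Y)%type)) :
  lamF A = orbit_lift T S mu y0 s0 A.
Proof.
rewrite (_ : lamF A = mnormalize (msum (fun j => pushM mu (mphi j)) s0)
   (\d_ (point : borel (X * Y)%type)) A) //.
rewrite (@mnormalizeE _ _ _ _ _ (s0%:R)); last 2 first.
- rewrite /pushM /=; rewrite /msum.
  rewrite (eq_bigr (fun=> 1%E)); last by move=> j _; exact: probability_setT.
  by rewrite sumr_const card_ord natmulE.
- by rewrite pnatr_eq0 -lt0n hs0.
by rewrite muleC /orbit_lift /msum /pushM.
Qed.

End Lift.

Lemma part3 (f : X * Y -> R) (cf : continuous f) (cXY : compact [set: (X * Y)%type])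
  (lam : Mprob (X * Y)%type R) : in_fiber T S nu lam ->
  (ereal_inf [set ((s0%:R)^-1 * \sum_(j < s0) f (iter j T x, iter j S y0))%:E
                | x in [set: X]] <= \int[lam]_z (f z)%:E)%E.
Proof.
case=> linv lmarg.
set mu := muF lam.
have lv := lift_val lam linv lmarg.
have [M hM] := @cont_bounded _ _ f cXY cf.
have M0 : 0 <= M by rewrite (le_trans _ (hM point)).
set g := fun x : X => (s0%:R)^-1 * \sum_(j < s0) f (iter j T x, iter j S y0).
have mle : forall x, (ereal_inf [set (g x)%:E | x in [set: X]] <= (g x)%:E)%E.
  by move=> x; apply: ereal_inf_lbound; exists x.
have gM : forall x, - M <= g x.
  move=> x; rewrite /g.
  have h : (- M) *+ s0 <= \sum_(j < s0) f (iter j T x, iter j S y0).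
    rewrite (_ : (- M) *+ s0 = \sum_(j < s0) (- M)); last by rewrite sumr_const card_ord.
    apply: ler_sum => j _; have := hM (iter j T x, iter j S y0).
    by rewrite ler_norml => /andP[].
  have s0p : 0 < (s0%:R : R) by rewrite ltr0n.
  rewrite -mulr_natr in h.
  have -> : - M = (s0%:R)^-1 * (- M * s0%:R) by field; rewrite gt_eqF.
  by rewrite ler_wpM2l // invr_ge0 ltW.
set m := ereal_inf _.
case Em : m => [r| |]; last by rewrite leNye.
  2: by have := mle point; rewrite -/m Em.
set r' := Num.max r (- M).
have hr' : forall x, r' <= g x.
  by move=> x; rewrite ge_max gM andbT -lee_fin -Em; exact: mle.
apply: (@le_trans _ _ r'%:E); first by rewrite lee_fin le_max lexx.
have intf : lam.-integrable setT (EFin \o f).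
  apply: measurable_bounded_integrable => //.
  - by apply: (le_lt_trans (@probability_le1 _ _ _ lam _ measurableT)); exact: ltry.
  - exact: cont_measR cf.
  - exists M; split; first exact: num_real.
    by move=> N MN z _ /=; rewrite (le_trans (hM z)) // ltW.
have intM : lam.-integrable setT (EFin \o cst M).
  exact: finite_measure_integrable_cst.
have eD : (\int[lam]_z ((f z)%:E + M%:E) = \int[lam]_z (f z)%:E + M%:E)%E.
  rewrite (integralD measurableT intf intM); congr (_ + _)%E.
  rewrite (_ : (\int[lam]_x (EFin \o cst M) x = \int[lam]_x (cst M%:E) x)%E) //.
  by rewrite integral_cst // prob_setT_meas mule1.
rewrite -(@leeD2rE _ M%:E) // -eD -EFinD.
have k0 : 0 <= (s0%:R : R)^-1 by rewrite invr_ge0 ler0n.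
pose k : {nonneg R} := NngNum k0.
have mfM : measurable_fun [set: borel (X * Y)%type] (fun z => ((f z)%:E + M%:E)%E).
  apply/measurable_EFinP; apply: measurable_funD => //; exact: cont_measR cf.
have fM0 : forall z, (0 <= (f z)%:E + M%:E)%E.
  move=> z; rewrite -EFinD lee_fin; have := hM z; rewrite ler_norml => /andP[h _].
  by rewrite -lerBlDr sub0r.
have e1 : (\int[lam]_z ((f z)%:E + M%:E) =
    \int[mscale k (msum (fun j => pushM mu (mphi j)) s0)]_z ((f z)%:E + M%:E))%E.
  apply: eq_measure_integral => A mA _; exact: lv.
rewrite e1 ge0_integral_mscale; [|exact: measurableT|exact: mfM|by move=> z _; exact: fM0].
rewrite ge0_integral_measure_sum; [|exact: measurableT|by move=> z _; exact: fM0|exact: mfM].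
pose hj := fun (j : 'I_s0) (x : borel X) => ((f (iter j F (x, y0)))%:E + M%:E)%E.
have mhj : forall j, measurable_fun [set: borel X] (hj j).
  move=> j; apply/measurable_EFinP; apply: measurable_funD => //.
  apply: cont_measR => x.
  exact: (continuous_comp (cphi j x) (cf _)).
have hj0 : forall j x, [set: borel X] x -> (0 <= hj j x)%E by move=> j x _; exact: fM0.
rewrite (eq_bigr (fun j : 'I_s0 => (\int[mu]_x hj j x)%E)); last first.
  by move=> j _; rewrite (@ge0_integral_pushM _ _ _ _ _ _ _ _ _ mfM fM0).
rewrite -(@ge0_integral_sum _ _ _ mu setT measurableT _ hj mhj hj0 (index_enum 'I_s0)).
apply: (@le_trans _ _ ((k%:num)%:E * \int[mu]_x (cst ((s0%:R) * (r' + M))%:E) x))%E.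
  rewrite integral_cst // prob_setT_meas mule1 -EFinM lee_fin /= mulrA mulVf ?mul1r //.
  by rewrite pnatr_eq0 -lt0n hs0.
apply: lee_wpmul2l; first by rewrite lee_fin.
apply: ge0_le_integral => //.
- move=> x _ /=; rewrite lee_fin; apply: mulr_ge0 => //.
  by rewrite -lerBlDr sub0r le_max lexx orbT.
- by apply: emeasurable_sum => j; exact: mhj.
move=> x _ /=; rewrite /hj.
under eq_bigr do rewrite -EFinD iter_prodmap /=.
rewrite sumEFin lee_fin big_split /= sumr_const card_ord -[M *+ s0]mulr_natr.
rewrite mulrDr (mulrC M) lerD2r.
have := ler_wpM2l (ler0n _ s0) (hr' x); rewrite /g mulrA mulfV ?mul1r //.
by rewrite pnatr_eq0 -lt0n hs0.
Qed.

End Main.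

Theorem lemma2p11 (R : realType) (X Y : pseudoPMetricType R)
  (T : X -> X) (S : Y -> Y) (hT : tds T) (hS : tds S)
  (y0 : Y) (s0 : nat) (hs0 : (0 < s0)%N) (hper : iter s0 S y0 = y0) :
  let nu := orbit_measure R S y0 s0 in
  (* the fiber over nu is exactly the set of lifts 1/s0 sum_j (TxS)^j_*(mu x delta_{y0}) *)
  (forall lam : Mprob (X * Y)%type R,
     in_fiber T S nu lam <->
     exists mu : Mprob X R, is_invariant (iter s0 T) mu /\
       forall A : set (borel (X * Y)%type), measurable A ->
         lam A = orbit_lift T S (mu : set X -> \bar R) y0 s0 A) /\
  (* each such lift is a Borel probability measure on X x Y *)
  (forall mu : Mprob X R, is_invariant (iter s0 T) mu ->
     exists lam : Mprob (X * Y)%type R,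
       forall A : set (borel (X * Y)%type), measurable A ->
         lam A = orbit_lift T S (mu : set X -> \bar R) y0 s0 A) /\
  (* consequence *)
  (forall f : X * Y -> R, continuous f ->
     (psi T S f nu >=
      ereal_inf [set ((s0%:R)^-1 * \sum_(j < s0) f (iter j T x, iter j S y0))%:E
                | x in [set: X]])%E).
Proof.
move=> nu.
case: hT => cX [_ [cT _]].
case: hS => cY [hY [cS [Si [_ [SK _]]]]].
have Sinj : injective S := can_inj SK.
split; [|split].
- move=> lam; split.
  + case=> linv lmarg.
    exists (muF R X Y hY y0 lam); split.
      exact: (@muF_inv _ _ _ _ _ cT cS Sinj hY _ _ hs0 hper _ linv lmarg).
    move=> A mA; exact: (@lift_val _ _ _ _ _ cT cS Sinj hY _ _ hs0 hper _ linv lmarg _ mA).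
  + case=> mu [minv hl].
    exact: (@lift_fiber _ _ _ _ _ cT cS _ _ hs0 hper _ minv _ hl).
- move=> mu minv; exists (lamF R X Y T S cT cS y0 s0 mu) => A _.
  exact: (@lamF_val _ _ _ _ _ cT cS _ _ hs0 mu A).
- move=> f cf; rewrite /psi; apply: le_ereal_inf_tmp => _ [lam hl <-].
  exact: (@part3 _ _ _ _ _ cT cS Sinj hY _ _ hs0 hper _ cf (@compact_prodT X Y cX cY) _ hl).
Qed.
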